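(* Let $c>0$ and $P\ge 1$ be constants, and let $$\Omega=\{(u,v,L,A): 0\le A\le 1;\ u,v,L\ge 0;\ uv\le 1;\ uv\le L\le P\sqrt{uv}\},\qquad \Omega_0=\{(u,v,A): 0\le A\le 1;\ u,v\ge 0;\ uv\le 1\}.$$ Let $B$ be a smooth function on $\Omega$ such that $0\le B\le u$ on $\Omega$, $\frac{\partial B}{\partial A}\ge c\,u\,L$ on $\Omega$, $-d^2B\ge 0$ on $\Omega$ (nonpositive definite Hessian), and such that $B_0(u,v,A):=\sup_{L:\,uv\le L\le P\sqrt{uv}}B(u,v,L,A)$ is concave on $\Omega_0$. Then there exists a function $B_0$ defined on $\Omega_0$ such that $0\le B_0\le u$, $\frac{\partial B_0}{\partial A}\ge c\,u^2v$, and $-d^2B_0\ge 0$ on $\Omega_0$. *)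

(* Defs.v *)
From Stdlib Require Import Reals List Arith.
From Coquelicot Require Import Coquelicot.
Open Scope R_scope.

(* Points of R^4 are represented as functions nat -> R; only the
   coordinates 0,1,2,3 = (u,v,L,A) are used. *)
Definition ev4 (B : R -> R -> R -> R -> R) (x : nat -> R) : R :=
  B (x 0%nat) (x 1%nat) (x 2%nat) (x 3%nat).

Definition upd (x : nat -> R) (i : nat) (t : R) : nat -> R :=
  fun j => if Nat.eqb j i then t else x j.

Definition partial (i : nat) (g : (nat -> R) -> R) : (nat -> R) -> R :=
  fun x => Derive (fun t => g (upd x i t)) (x i).

(* iterated partial derivative: dseq [i1; ...; ik] g = d_i1 (... (d_ik g)) *)
Fixpoint dseq (s : list nat) (g : (nat -> R) -> R) : (nat -> R) -> R :=
  match s with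
  | nil => g
  | i :: s' => partial i (dseq s' g)
  end.

Definition near4 (x : nat -> R) (r : R) (y : nat -> R) : Prop :=
  forall j, (j < 4)%nat -> Rabs (y j - x j) < r.

Definition cont4 (g : (nat -> R) -> R) (x : nat -> R) : Prop :=
  forall eps, 0 < eps -> exists d, 0 < d /\
    forall y, near4 x d y -> Rabs (g y - g x) < eps.

Definition smooth_on4 (g : (nat -> R) -> R) (S : (nat -> R) -> Prop) : Prop :=
  forall x, S x -> exists r, 0 < r /\
    forall s, List.Forall (fun i => (i < 4)%nat) s ->
    forall y, near4 x r y ->
      cont4 (dseq s g) y /\
      forall i, (i < 4)%nat -> ex_derive (fun t => dseq s g (upd y i t)) (y i).

Definition neg_hessian4 (g : (nat -> R) -> R) (x : nat -> R) : Prop :=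
  forall h : nat -> R,
    sum_f_R0 (fun i => sum_f_R0 (fun j =>
       h i * h j * dseq (i :: j :: nil) g x) 3) 3 <= 0.

(* The domain Omega, coordinates (u,v,L,A) *)
Definition Omega (P u v L A : R) : Prop :=
  0 <= A <= 1 /\ 0 <= u /\ 0 <= v /\ 0 <= L /\ u * v <= 1 /\
  u * v <= L <= P * sqrt (u * v).

Definition Omega4 (P : R) (x : nat -> R) : Prop :=
  Omega P (x 0%nat) (x 1%nat) (x 2%nat) (x 3%nat).

Definition Omega0 (u v A : R) : Prop :=
  0 <= A <= 1 /\ 0 <= u /\ 0 <= v /\ u * v <= 1.

Definition Bsup (B : R -> R -> R -> R -> R) (P u v A : R) : R :=
  real (Lub_Rbar (fun y => exists L,
           u * v <= L <= P * sqrt (u * v) /\ y = B u v L A)).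

(* This is the meaning of "-d^2 f >= 0" for a function on the
   (non-convex) domain Omega_0 that need not be twice differentiable. *)
Definition concave_on0 (f : R -> R -> R -> R) : Prop :=
  forall u1 v1 A1 u2 v2 A2,
    (forall t, 0 <= t <= 1 ->
       Omega0 (t * u1 + (1 - t) * u2) (t * v1 + (1 - t) * v2)
              (t * A1 + (1 - t) * A2)) ->
    forall t, 0 <= t <= 1 ->
      t * f u1 v1 A1 + (1 - t) * f u2 v2 A2 <=
      f (t * u1 + (1 - t) * u2) (t * v1 + (1 - t) * v2)
        (t * A1 + (1 - t) * A2).

(* Main.v *)
Require Import Defs.
From Stdlib Require Import Reals List Lra.
From Coquelicot Require Import Coquelicot.
Open Scope R_scope.

Lemma lub_props (E : R -> Prop) (y0 M : R) : E y0 -> (forall y, E y -> y <= M) ->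
  (forall y, E y -> y <= real (Lub_Rbar E)) /\
  (forall M', (forall y, E y -> y <= M') -> real (Lub_Rbar E) <= M').
Proof.
  intros H0 HM. destruct (Lub_Rbar_correct E) as [ub lub].
  destruct (Lub_Rbar E) as [r| |] eqn:Hl.
  - split.
    + intros y Hy. exact (ub y Hy).
    + intros M' HM'. apply (lub (Finite M')). intros y Hy. exact (HM' y Hy).
  - exfalso. apply (lub (Finite M)). intros y Hy. exact (HM y Hy).
  - exfalso. exact (ub y0 H0).
Qed.

Lemma sqrt_ge (x : R) : 0 <= x -> x <= 1 -> x <= sqrt x.
Proof.
  intros h0 h1. assert (Hs : sqrt x <= 1) by (rewrite <- sqrt_1; apply sqrt_le_1; lra).
  pose proof (sqrt_pos x). pose proof (sqrt_sqrt x h0). nra.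
Qed.

Definition mk4 (u v L a : R) : nat -> R :=
  fun j => match j with 0%nat => u | 1%nat => v | 2%nat => L | _ => a end.

Theorem mainTheorem6 (c P : R) (B : R -> R -> R -> R -> R)
  (hc : 0 < c) (hP : 1 <= P)
  (Bsmooth : smooth_on4 (ev4 B) (Omega4 P))
  (Bbnd : forall u v L A, Omega P u v L A -> 0 <= B u v L A <= u)
  (BdA : forall x, Omega4 P x -> c * x 0%nat * x 2%nat <= partial 3 (ev4 B) x)
  (Bhess : forall x, Omega4 P x -> neg_hessian4 (ev4 B) x)
  (B0conc : concave_on0 (Bsup B P)) :
  exists B0 : R -> R -> R -> R,
    (forall u v A, Omega0 u v A -> 0 <= B0 u v A <= u) /\
    (forall u v A A', Omega0 u v A -> Omega0 u v A' -> A <= A' ->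
       c * u ^ 2 * v * (A' - A) <= B0 u v A' - B0 u v A) /\
    concave_on0 B0.
Proof.
  exists (Bsup B P). 
  assert (Hrange : forall u v A, Omega0 u v A -> u * v <= u * v <= P * sqrt (u * v)).
  { intros u v A [hA [hu [hv huv]]]. split; [lra|].
    pose proof (sqrt_ge (u*v) ltac:(nra) huv). pose proof (sqrt_pos (u*v)). nra. }
  assert (Hom : forall u v L A, Omega0 u v A -> u * v <= L <= P * sqrt (u * v) ->
     Omega P u v L A).
  { intros u v L A [hA [hu [hv huv]]] hL. unfold Omega. repeat split; try lra. nra. }
  assert (Hprops : forall u v A, Omega0 u v A ->
    (forall y, (exists L, u * v <= L <= P * sqrt (u * v) /\ y = B u v L A) -> y <= Bsup B P u v A) /\
    (forall M', (forall y, (exists L, u * v <= L <= P * sqrt (u * v) /\ y = B u v L A) -> y <= M') ->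
       Bsup B P u v A <= M')).
  { intros u v A H. apply (lub_props _ (B u v (u*v) A) u).
    - exists (u*v). split; [apply (Hrange u v A H)|reflexivity].
    - intros y [L [hL ->]]. apply (Bbnd u v L A (Hom u v L A H hL)). }
  split; [|split; [|exact B0conc]].
  - intros u v A H. destruct (Hprops u v A H) as [h1 h2]. split.
    + apply Rle_trans with (B u v (u*v) A).
      * apply (Bbnd u v (u*v) A (Hom u v _ A H (Hrange u v A H))).
      * apply h1. exists (u*v). split; [apply (Hrange u v A H)|reflexivity].
    + apply h2. intros y [L [hL ->]]. apply (Bbnd u v L A (Hom u v L A H hL)).
  - intros u v A A' H H' hAA'.
    destruct (Hprops u v A H) as [_ h2]. destruct (Hprops u v A' H') as [h1' _].
    cut (Bsup B P u v A <= Bsup B P u v A' - c * u ^ 2 * v * (A' - A)); [lra|].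
    apply h2. intros y [L [hL ->]].
    assert (Hin : forall a, A <= a <= A' -> Omega0 u v a).
    { intros a ha. destruct H as [hA [hu [hv huv]]]. destruct H' as [hA' _].
      repeat split; lra. }
    assert (Hder : forall a, A <= a <= A' ->
      ex_derive (fun t => B u v L t) a /\ c * u * L <= Derive (fun t => B u v L t) a).
    { intros a ha. pose proof (Hom u v L a (Hin a ha) hL) as Hx.
      assert (Hx4 : Omega4 P (mk4 u v L a)) by exact Hx.
      split.
      - destruct (Bsmooth _ Hx4) as [r [hr Hs]].
        destruct (Hs nil (Forall_nil _) (mk4 u v L a)) as [_ Hd].
        + intros j hj. unfold Rminus. rewrite Rplus_opp_r, Rabs_R0. exact hr.
        + exact (Hd 3%nat ltac:(auto)).
      - exact (BdA _ Hx4). }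
    destruct (MVT_gen (fun t => B u v L t) A A' (Derive (fun t => B u v L t))) as [xi [hxi heq]].
    + intros a ha. rewrite Rmin_left in ha by lra. rewrite Rmax_right in ha by lra.
      apply Derive_correct. apply Hder; lra.
    + intros a ha. rewrite Rmin_left in ha by lra. rewrite Rmax_right in ha by lra.
      apply continuity_pt_filterlim. apply (ex_derive_continuous (K:=R_AbsRing) (V:=R_NormedModule) (fun t => B u v L t)). apply Hder; lra.
    + rewrite Rmin_left in hxi by lra. rewrite Rmax_right in hxi by lra.
      destruct (Hder xi hxi) as [_ hd].
      assert (B u v L A' <= Bsup B P u v A').
      { apply h1'. exists L. split; [exact hL|reflexivity]. }
      destruct H as [hA [hu [hv huv]]].
      assert (c * u ^ 2 * v <= c * u * L) by (assert (0 <= c*u) by nra; replace (c*u^2*v) with ((c*u)*(u*v)) by ring; apply Rmult_le_compat_l; lra).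
      simpl in heq. assert (c * u ^ 2 * v * (A' - A) <= Derive (fun t => B u v L t) xi * (A' - A)) by (apply Rmult_le_compat_r; lra). lra.
Qed.
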